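(* Let $N,n\in\mathbb{N}$ and let $\{\mathcal{G}_i\}_{i=1}^n$ be a set of directed regular graphs without loops on the same set of $N$ vertices. Then there exists a directed graph $\mathcal{G}$ such that $\operatorname{Aut}\mathcal{G}=\bigcap_{i=1}^n\operatorname{Aut}\mathcal{G}_i$.
   Context: A directed graph is regular if every vertex has the same in-degree and out-degree $d$ (i.e. $A\mathbf{1}=A^T\mathbf{1}=d\mathbf{1}$ for the adjacency matrix $A$). The intersection is taken inside the permutation group of the common vertex set; the equality is understood via the natural injective embedding of $\bigcap_i\operatorname{Aut}\mathcal{G}_i$ into $\operatorname{Aut}\mathcal{G}$ (as groups, $\operatorname{Aut}\mathcal{G}\cong\bigcap_i\operatorname{Aut}\mathcal{G}_i$). *)

(* Defs.v *)
From mathcomp Require Import all_boot all_fingroup.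
Set Implicit Arguments. Unset Strict Implicit. Unset Printing Implicit Defensive.

Definition digraph_aut (T : finType) (E : rel T) : {set {perm T}} :=
  [set s : {perm T} | [forall x, forall y, E (s x) (s y) == E x y]].

Definition loopless (T : finType) (E : rel T) : Prop := forall x, ~~ E x x.

Definition regular_digraph (T : finType) (E : rel T) : Prop :=
  exists d : nat, forall v : T,
    #|[set u | E u v]| = d /\ #|[set u | E v u]| = d.

(* Main.v *)
Require Import Defs.
From mathcomp Require Import all_boot all_fingroup.
Set Implicit Arguments. Unset Strict Implicit. Unset Printing Implicit Defensive.

Lemma autP (V : finType) (E : rel V) (s : {perm V}) :
  reflect (forall x y, E (s x) (s y) = E x y) (s \in digraph_aut E).
Proof.
rewrite inE; apply: (iffP forallP) => [h x y | h x].
  by have /forallP/(_ y)/eqP := h x.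
by apply/forallP => y; rewrite h.
Qed.

Section Transport.
Variables (V : finType).
Let M := #|V|.
Definition cfun (p : {perm V}) (a : 'I_M) : 'I_M := enum_rank (p (enum_val a)).
Lemma cfun_inj p : injective (cfun p).
Proof.
move=> a b /(congr1 enum_val); rewrite /cfun !enum_rankK => /perm_inj.
exact: enum_val_inj.
Qed.
Definition cperm p : {perm 'I_M} := perm (@cfun_inj p).
Definition icfun (q : {perm 'I_M}) (v : V) : V := enum_val (q (enum_rank v)).
Lemma icfun_inj q : injective (icfun q).
Proof.
move=> a b /(congr1 enum_rank); rewrite /icfun !enum_valK => /perm_inj.
exact: enum_rank_inj.
Qed.
Definition icperm q : {perm V} := perm (@icfun_inj q).

Lemma cpermM p q : cperm (p * q)%g = (cperm p * cperm q)%g.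
Proof. by apply/permP => a; rewrite permM !permE /cfun permM enum_rankK. Qed.

Lemma cperm_aut (E : rel V) :
  cperm @: digraph_aut E =
  digraph_aut (fun a b : 'I_M => E (enum_val a) (enum_val b)).
Proof.
apply/setP => q; apply/imsetP/autP.
  case=> p /autP hp -> a b; by rewrite !permE /cfun !enum_rankK hp.
move=> hq; exists (icperm q).
  apply/autP => x y; rewrite !permE /icfun hq; by rewrite !enum_rankK.
by apply/permP => a; rewrite !permE /cfun !permE /icfun !enum_valK.
Qed.
End Transport.

Lemma transport (T V : finType) (H : {set {perm T}}) (E : rel V)
  (iota : T -> V) (f : {perm T} -> {perm V}) :
  injective iota -> {in H &, forall s t, f (s * t)%g = (f s * f t)%g} ->
  {in H, forall s x, f s (iota x) = iota (s x)} ->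
  f @: H = digraph_aut E ->
  exists (M : nat) (E' : rel 'I_M) (iota' : T -> 'I_M)
         (f' : {perm T} -> {perm 'I_M}),
    [/\ injective iota',
        {in H &, forall s t, f' (s * t)%g = (f' s * f' t)%g},
        {in H, forall s x, f' s (iota' x) = iota' (s x)} &
        f' @: H = digraph_aut E'].
Proof.
move=> iinj fM fe fH.
exists #|V|, (fun a b : 'I_#|V| => E (enum_val a) (enum_val b)),
  (fun x => enum_rank (iota x)), (fun s => cperm (f s)); split.
- by move=> x y /enum_rank_inj /iinj.
- by move=> s t hs ht /=; rewrite fM // cpermM.
- by move=> s hs x /=; rewrite permE /cfun enum_rankK fe.
- by rewrite (imset_comp (@cperm V) f) fH cperm_aut.
Qed.

Lemma outdeg_aut (V : finType) (E : rel V) (s : {perm V}) :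
  s \in digraph_aut E -> forall v, #|[set u | E (s v) u]| = #|[set u | E v u]|.
Proof.
move=> /autP hs v.
have ->: [set u | E (s v) u] = s @: [set u | E v u].
  apply/setP => u; rewrite inE; apply/idP/imsetP.
    by move=> h; exists (s^-1 u)%g; rewrite ?inE ?permKV // -hs permKV.
  by case=> w; rewrite inE => h ->; rewrite hs.
exact: card_imset (@perm_inj _ s).
Qed.

Section Main.
Variables (N n : nat) (G : 'I_n -> rel 'I_N).

Definition VV := (('I_n.+1 + 'I_N) + ('I_N * 'I_N))%type.

Definition E0 (u v : VV) : bool :=
  match u, v with
  | inl (inl a), inl (inl b) => a <= b
  | inl (inr x), inr (x', _) => x == x'
  | inr (_, y), inl (inr y') => y == y'
  | inr (x, y), inl (inl a) =>
      if unlift ord0 a is Some i then G i x y else true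
  | _, _ => false
  end.

Definition ffun_ (s : {perm 'I_N}) (v : VV) : VV :=
  match v with
  | inl (inl a) => inl (inl a)
  | inl (inr x) => inl (inr (s x))
  | inr (x, y) => inr (s x, s y)
  end.

Lemma ffun_inj s : injective (ffun_ s).
Proof.
move=> [[a|x]|[x y]] [[b|z]|[z w]] //= [].
- by move=> /perm_inj ->.
- by move=> /perm_inj -> /perm_inj ->.
Qed.

Definition fperm s : {perm VV} := perm (@ffun_inj s).

Let H := \bigcap_(i < n) digraph_aut (G i).

Lemma fpermM s t : fperm (s * t)%g = (fperm s * fperm t)%g.
Proof. by apply/permP => [[[a|x]|[x y]]]; rewrite permM !permE /= ?permM. Qed.

Lemma fperm_in s : s \in H -> fperm s \in digraph_aut E0.
Proof.
move=> /bigcapP hs; apply/autP => u v; rewrite !permE.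
case: u => [[a|x]|[x y]]; case: v => [[b|z]|[z w]] //=; rewrite ?(inj_eq perm_inj) //.
case: (unlift ord0 b) => // i.
by have /autP -> := hs i isT.
Qed.

Lemma hub_mono (a b : 'I_n.+1) : a < b ->
  #|[set u | E0 (inl (inl b)) u]| < #|[set u | E0 (inl (inl a)) u]|.
Proof.
move=> ab; apply: proper_card; apply/properP; split.
  apply/subsetP => -[[c|x]|[x y]]; rewrite !inE //= => bc.
  exact: leq_trans (ltnW ab) bc.
by exists (inl (inl a)); rewrite !inE /= ?leqnn // leqNgt ab.
Qed.

Lemma aut_in sg : sg \in digraph_aut E0 -> exists2 s, s \in H & sg = fperm s.
Proof.
move=> sgA; have /autP hs := sgA.
have hub : forall a, sg (inl (inl a)) = inl (inl a).
  move=> a; case E: (sg (inl (inl a))) => [[b|x]|[x y]].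
  - have := outdeg_aut sgA (inl (inl a)); rewrite E => h.
    case: (ltngtP a b) => [ab|ba|/val_inj -> //].
      by have := hub_mono ab; rewrite h ltnn.
    by have := hub_mono ba; rewrite h ltnn.
  - by have := hs (inl (inl a)) (inl (inl a)); rewrite E /= leqnn.
  - by have := hs (inl (inl a)) (inl (inl a)); rewrite E /= leqnn.
pose sf x := if sg (inl (inr x)) is inl (inr y) then y else x.
have tv : forall x, sg (inl (inr x)) = inl (inr (sf x)).
  move=> x; rewrite /sf; case E: (sg (inl (inr x))) => [[b|y]|[y z]] //.
  - by have := hs (inl (inr x)) (inl (inr x)); rewrite E /= leqnn.
  - by have := hs (inl (inr x)) (inl (inl ord0)); rewrite E hub /= unlift_none.
have sf_inj : injective sf.
  by move=> x y e; have := tv x; rewrite e -tv => /perm_inj [].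
pose s := perm sf_inj.
have pv : forall x y, sg (inr (x, y)) = inr (s x, s y).
  move=> x y; case E: (sg (inr (x, y))) => [[b|z]|[z w]].
  - by have := hs (inr (x, y)) (inr (x, y)); rewrite E /= leqnn.
  - by have := hs (inr (x, y)) (inl (inl ord0)); rewrite E hub /= unlift_none.
  - have := hs (inl (inr x)) (inr (x, y)); rewrite E tv /= eqxx => /eqP <-.
    have := hs (inr (x, y)) (inl (inr y)); rewrite E tv /= eqxx => /eqP ->.
    by rewrite !permE.
exists s.
  apply/bigcapP => i _; apply/autP => x y.
  have := hs (inr (x, y)) (inl (inl (lift ord0 i))).
  by rewrite pv hub /= liftK.
apply/permP => -[[a|x]|[x y]]; rewrite permE /= ?hub ?pv //.
by rewrite tv permE.
Qed.

Lemma main_VV (hyp : True) :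
  exists (E : rel VV) (iota : 'I_N -> VV) (f : {perm 'I_N} -> {perm VV}),
    [/\ injective iota,
        {in H &, forall s t, f (s * t)%g = (f s * f t)%g},
        {in H, forall s x, f s (iota x) = iota (s x)} &
        f @: H = digraph_aut E].
Proof.
exists E0, (fun x => inl (inr x)), fperm; split.
- by move=> x y [].
- by move=> s t _ _; rewrite fpermM.
- by move=> s _ x; rewrite permE.
- apply/setP => sg; apply/imsetP/idP.
    by case=> s hs ->; apply: fperm_in.
  by move/aut_in => [s hs ->]; exists s.
Qed.
End Main.

Theorem proposition5p1 (N n : nat) (G : 'I_n -> rel 'I_N) :
  (forall i, regular_digraph (G i) /\ loopless (G i)) ->
  exists (M : nat) (E : rel 'I_M) (iota : 'I_N -> 'I_M)
         (f : {perm 'I_N} -> {perm 'I_M}),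
    [/\ injective iota,
        {in (\bigcap_(i < n) digraph_aut (G i)) &,
           forall s t, f (s * t)%g = (f s * f t)%g},
        {in (\bigcap_(i < n) digraph_aut (G i)),
           forall s x, f s (iota x) = iota (s x)} &
        f @: (\bigcap_(i < n) digraph_aut (G i)) = digraph_aut E].
Proof.
move=> _.
have [E [iota [f [h1 h2 h3 h4]]]] := main_VV G I.
exact: transport h1 h2 h3 h4.
Qed.
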